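(* In the setting of the context, for every choice of keys $k,k'$ and permutation $\sigma$, the original ciphertext $M_f^{(0)}$ and the anamorphic ciphertext $M_f^{(1)}$ are computationally indistinguishable: for every quantum circuit $C$ with a single-bit classical output, \[ \big|\Pr[C(M_f^{(0)})=1]-\Pr[C(M_f^{(1)})=1]\big|<\varepsilon . \]
   Context: Let $d_1\ge d_2\ge1$, $\mathcal H_M=(\mathbb C^2)^{\otimes d_1}$, $\mathcal H_{M_c}=(\mathbb C^2)^{\otimes d_2}$, and $U_k=\bigotimes_{j}X^{k_{2j-1}}Z^{k_{2j}}$ (Pauli $X,Z$) for bit strings $k$. $M_o$ is a strictly positive definite density matrix on $\mathcal H_M$, $M_c$ a density matrix on $\mathcal H_{M_c}$; $M_o'=U_kM_oU_k^\dagger$ ($k\in\{0,1\}^{2d_1}$), $M_c'=U_{k'}M_cU_{k'}^\dagger$ ($k'\in\{0,1\}^{2d_2}$), $V|\psi\rangle=|\psi\rangle\otimes|0\rangle^{\otimes(d_1-d_2)}$, $M_c''=VM_c'V^\dagger$. For $\eta\in\mathbb Z^+$, on $\mathbb C^2\otimes\mathcal H_M$ (blocks w.r.t. the first qubit), $M_a^{(0)}=\begin{pmatrix}\frac12M_o'&0\\0&\frac12M_o'\end{pmatrix}$, $M_a^{(1)}=\begin{pmatrix}\frac12M_o'&\frac1\eta M_c''\\\frac1\eta(M_c'')^\dagger&\frac12M_o'\end{pmatrix}$, $M_f^{(b)}=U_\sigma M_a^{(b)}U_\sigma^\dagger$ with $U_\sigma$ a $2^{d_1+1}\times2^{d_1+1}$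 permutation matrix. Standing assumption of the construction: for a given threshold $\varepsilon>0$ (written $\mathsf{negl}(\lambda)$), $\eta$ satisfies $1/\eta<\varepsilon$ and $\frac1{\eta^2}\|M_c''(M_o')^{-1}M_c''\|\le\frac14\lambda_{\min}(M_o')$ (operator norm). *)

(* Defs.v *)
From HB Require Import structures.
From mathcomp Require Import all_boot all_order all_algebra.
From mathcomp Require Import fingroup perm sesquilinear spectral.
From mathcomp Require Import complex mxtens.
From mathcomp Require Import reals.

Set Implicit Arguments.
Unset Strict Implicit.
Unset Printing Implicit Defensive.

Import Order.TTheory GRing.Theory Num.Theory.
Local Open Scope ring_scope.
Local Open Scope sesquilinear_scope.

Section QDefs.
Variable R : realType.
Local Notation C := (R[i]).

Definition adjmx m n (A : 'M[C]_(m, n)) : 'M[C]_(n, m) := A ^t*.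

Definition hermitian n (A : 'M[C]_n) : Prop := adjmx A = A.

Definition psdmx n (A : 'M[C]_n) : Prop :=
  hermitian A /\ forall v : 'cV[C]_n, 0 <= (adjmx v *m A *m v) 0 0.

Definition pdmx n (A : 'M[C]_n) : Prop :=
  hermitian A /\ forall v : 'cV[C]_n, v != 0 -> 0 < (adjmx v *m A *m v) 0 0.

Definition density n (A : 'M[C]_n) : Prop := psdmx A /\ \tr A = 1.

Definition vnorm n (v : 'cV[C]_n) : C := sqrtC ((adjmx v *m v) 0 0).

Definition is_opnorm m n (A : 'M[C]_(m, n)) (c : C) : Prop :=
  (forall v : 'cV[C]_n, vnorm (A *m v) <= c * vnorm v) /\
  (forall c' : C, (forall v : 'cV[C]_n, vnorm (A *m v) <= c' * vnorm v) -> c <= c').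

Definition is_lambda_min n (A : 'M[C]_n) (l : C) : Prop :=
  eigenvalue A l /\ (forall m, eigenvalue A m -> l <= m).

(* bit of qubit j (0-indexed, qubit 0 = most significant) of basis index x *)
Definition qbit (d : nat) (x : nat) (j : 'I_d) : bool := odd (x %/ 2 ^ (d - j.+1)).

(* U_k = (x)_j X^{k_{2j-1}} Z^{k_{2j}}; the key k in {0,1}^{2d} is given as
   k j = (k_{2j-1}, k_{2j}) for the j-th qubit.
   U_k |x> = (-1)^{sum_j k_{2j} x_j} |x xor (k_{2j-1})_j>. *)
Definition pauliU (d : nat) (k : 'I_d -> bool * bool) : 'M[C]_(2 ^ d) :=
  \matrix_(i, x)
    if [forall j : 'I_d, qbit i j == (qbit x j (+) (k j).1)]
    then (-1) ^+ (\sum_(j < d) ((k j).2 && qbit x j : nat))%N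
    else 0.

(* V |psi> = |psi> (x) |0>^{(d1-d2)} *)
Definition Vemb (d1 d2 : nat) : 'M[C]_(2 ^ d1, 2 ^ d2) :=
  \matrix_(i, j) ((i : nat) == (j * 2 ^ (d1 - d2))%N)%:R.

Definition Mo' d1 (k : 'I_d1 -> bool * bool) (Mo : 'M[C]_(2 ^ d1)) :=
  pauliU k *m Mo *m adjmx (pauliU k).

Definition Mc'' d1 d2 (k' : 'I_d2 -> bool * bool) (Mc : 'M[C]_(2 ^ d2)) :
  'M[C]_(2 ^ d1) :=
  Vemb d1 d2 *m (pauliU k' *m Mc *m adjmx (pauliU k')) *m adjmx (Vemb d1 d2).

(* blocks w.r.t. the first qubit *)
Definition Ma (b : bool) d1 (eta : nat) (Mop Mcpp : 'M[C]_(2 ^ d1)) :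
  'M[C]_(2 ^ d1 + 2 ^ d1) :=
  block_mx ((2%:R)^-1 *: Mop) (if b then (eta%:R)^-1 *: Mcpp else 0)
           (if b then (eta%:R)^-1 *: adjmx Mcpp else 0) ((2%:R)^-1 *: Mop).

Definition Mf (b : bool) d1 (s : 'S_(2 ^ d1 + 2 ^ d1)) (eta : nat)
  (Mop Mcpp : 'M[C]_(2 ^ d1)) : 'M[C]_(2 ^ d1 + 2 ^ d1) :=
  perm_mx s *m Ma b eta Mop Mcpp *m adjmx (perm_mx s).

(* Quantum circuit with single-bit classical output, on an n-dim input and
   a ancilla qubits initialized to |0...0>: a unitary U on the joint system,
   followed by a computational-basis measurement of the first qubit. *)
Lemma pow2_gt0 (a : nat) : (0 < 2 ^ a)%N.
Proof. by rewrite expn_gt0. Qed.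

Definition anc0 (a : nat) : 'I_(2 ^ a) := Ordinal (pow2_gt0 a).

Definition anc_state (a : nat) : 'M[C]_(2 ^ a) := delta_mx (anc0 a) (anc0 a).

(* projector onto |1> for the first qubit of a 2m-dimensional register *)
Definition proj1_first m : 'M[C]_(m + m) := block_mx 0 0 0 1%:M.

Definition accept_prob m (a : nat) (U : 'M[C]_((m + m) * 2 ^ a))
  (rho : 'M[C]_(m + m)) : C :=
  \tr (tensmx (proj1_first m) (1%:M : 'M[C]_(2 ^ a)) *m
       (U *m tensmx rho (anc_state a) *m adjmx U)).

End QDefs.

(* Main.v *)
Require Import Defs.
From HB Require Import structures.
From mathcomp Require Import all_boot all_order all_algebra.
From mathcomp Require Import fingroup perm sesquilinear spectral.
From mathcomp Require Import complex mxtens.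
From mathcomp Require Import reals.

Set Implicit Arguments.
Unset Strict Implicit.
Unset Printing Implicit Defensive.
Import Order.TTheory GRing.Theory Num.Theory.
Local Open Scope ring_scope.
From mathcomp Require Import zify.
Section Bits.
Local Open Scope nat_scope.

Lemma bits_inj d : forall x y, x < 2 ^ d -> y < 2 ^ d ->
  (forall t, t < d -> odd (x %/ 2 ^ t) = odd (y %/ 2 ^ t)) -> x = y.
Proof.
elim: d => [|d IH] x y hx hy H.
  by move: hx hy; rewrite expn0 !ltnS !leqn0 => /eqP-> /eqP->.
have h0 := H 0%N (ltn0Sn d); rewrite expn0 !divn1 in h0.
have e : x %/ 2 = y %/ 2.
  apply: IH.
  - by rewrite ltn_divLR // -expnSr.
  - by rewrite ltn_divLR // -expnSr.
  move=> t ht; have := H t.+1 ht.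
  by rewrite expnS !divnMA.
by rewrite (divn_eq x 2) (divn_eq y 2) !modn2 e h0.
Qed.

Lemma qbit_inj d (x y : 'I_(2 ^ d)) :
  (forall j : 'I_d, qbit x j = qbit y j) -> x = y.
Proof.
move=> H; apply: val_inj; apply: (bits_inj (ltn_ord x) (ltn_ord y)) => t ht.
have hj : d - t.+1 < d by lia.
have := H (Ordinal hj); rewrite /qbit /=.
by have -> : d - (d - t.+1).+1 = t by lia.
Qed.

Lemma qbit_surj d (f : 'I_d -> bool) :
  exists i : 'I_(2 ^ d), forall j, qbit i j = f j.
Proof.
pose g (i : 'I_(2 ^ d)) : {ffun 'I_d -> bool} := [ffun j => qbit i j].
have ginj : injective g.
  by move=> x y /ffunP H; apply: qbit_inj => j; have := H j; rewrite !ffunE.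
have := inj_card_onto ginj _ [ffun j => f j].
rewrite card_ffun card_bool !card_ord leqnn => /(_ isT) /codomP [i hi].
by exists i => j; have /ffunP /(_ j) := hi; rewrite !ffunE.
Qed.

End Bits.
Section Gen.
Variable R : realType.
Local Notation C := (R[i]).

Lemma adjmx_mul m n p (A : 'M[C]_(m, n)) (B : 'M[C]_(n, p)) :
  adjmx (A *m B) = adjmx B *m adjmx A.
Proof. by rewrite /adjmx trmx_mul map_mxM. Qed.

Lemma adjmxK m n (A : 'M[C]_(m, n)) : adjmx (adjmx A) = A.
Proof. exact: trmxCK. Qed.

Lemma adjmxD m n (A B : 'M[C]_(m, n)) : adjmx (A + B) = adjmx A + adjmx B.
Proof. by rewrite /adjmx linearD /= map_mxD. Qed.

Lemma adjmxN m n (A : 'M[C]_(m, n)) : adjmx (- A) = - adjmx A.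
Proof. by rewrite /adjmx linearN /= map_mxN. Qed.

Lemma adjmx1 n : adjmx (1%:M : 'M[C]_n) = 1%:M.
Proof. by rewrite /adjmx trmx1 map_mx1. Qed.

Definition psdq n (X : 'M[C]_n) := forall v : 'cV[C]_n, 0 <= (adjmx v *m X *m v) 0 0.

Lemma psdq_conj m n (X : 'M[C]_n) (A : 'M[C]_(m, n)) :
  psdq X -> psdq (A *m X *m adjmx A).
Proof.
move=> hX v; have := hX (adjmx A *m v).
by rewrite adjmx_mul adjmxK !mulmxA.
Qed.

Lemma psdq_tr n (X : 'M[C]_n) : psdq X -> 0 <= \tr X.
Proof.
move=> hX; rewrite /mxtrace; apply: sumr_ge0 => i _.
have := hX (delta_mx i 0).
have -> : adjmx (delta_mx i 0 : 'cV[C]_n) = delta_mx 0 i.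
  by apply/matrixP => a b; rewrite !mxE /= conjC_nat andbC.
by rewrite -rowE -colE !mxE.
Qed.

Lemma psdq_scale n (X : 'M[C]_n) (c : C) : 0 <= c -> psdq X -> psdq (c *: X).
Proof.
move=> c0 hX v; rewrite -scalemxAr -scalemxAl mxE; exact: mulr_ge0.
Qed.


Lemma trQ_ge0 p (Q Z : 'M[C]_p) :
  adjmx Q = Q -> Q *m Q = Q -> psdq Z -> 0 <= \tr (Q *m Z).
Proof.
move=> hQ QQ hZ.
have -> : \tr (Q *m Z) = \tr (Q *m Z *m adjmx Q).
  by rewrite hQ -mulmxA [RHS]mxtrace_mulC -mulmxA QQ mxtrace_mulC.
exact/psdq_tr/psdq_conj.
Qed.

Lemma acc_bound p m (Q : 'M[C]_p) (A : 'M[C]_(p, m)) (rho : 'M[C]_m) :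
  adjmx Q = Q -> Q *m Q = Q -> adjmx A *m A = 1%:M -> psdq rho ->
  0 <= \tr (Q *m (A *m rho *m adjmx A)) <= \tr rho.
Proof.
move=> hQ QQ hA hr.
have hZ := psdq_conj A hr.
apply/andP; split; first exact: trQ_ge0.
have trZ : \tr (A *m rho *m adjmx A) = \tr rho.
  by rewrite mxtrace_mulC mulmxA hA mul1mx.
rewrite -subr_ge0 -trZ -[X in \tr X - _]mul1mx -(raddfB (@mxtrace _ _)) -mulmxBl.
apply: trQ_ge0 => //.
  by rewrite adjmxD adjmxN hQ adjmx1.
by rewrite mulmxBl mul1mx mulmxBr mulmx1 QQ subrr subr0.
Qed.


Definition Wm m a : 'M[C]_(m * 2 ^ a, m) :=
  \matrix_(k, j) (mxtens_unindex k == (j, anc0 a))%:R.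

Lemma Wm_iso m a : adjmx (Wm m a) *m Wm m a = 1%:M.
Proof.
apply/matrixP => i j; rewrite !mxE.
rewrite (bigD1 (mxtens_index (i, anc0 a))) //= big1 => [|k hk].
  rewrite !mxE mxtens_indexK eqxx conjC_nat mul1r addr0 xpair_eqE eqxx andbT.
  by rewrite eq_sym.
rewrite !mxE conjC_nat.
have -> : (mxtens_unindex k == (i, anc0 a)) = false.
  apply/negbTE; apply: contra hk => /eqP <-.
  by rewrite mxtens_unindexK.
by rewrite mul0r.
Qed.

Lemma tens_anc m a (rho : 'M[C]_m) :
  tensmx rho (anc_state R a) = Wm m a *m rho *m adjmx (Wm m a).
Proof.
apply/matrixP => k l.
case: (mxtens_indexP k) => k1 k2; case: (mxtens_indexP l) => l1 l2.
rewrite tensmxE !mxE.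
rewrite (bigD1 l1) //= big1 => [|j hj]; last first.
  rewrite !mxE mxtens_indexK xpair_eqE conjC_nat.
  by rewrite eq_sym (negbTE hj) mulr0.
rewrite addr0 !mxE mxtens_indexK xpair_eqE eqxx conjC_nat /=.
rewrite (bigD1 k1) //= big1 => [|j hj]; last first.
  by rewrite !mxE mxtens_indexK xpair_eqE eq_sym (negbTE hj) mul0r.
rewrite addr0 !mxE mxtens_indexK xpair_eqE eqxx /=.
case: (k2 == anc0 a); case: (l2 == anc0 a); rewrite /= ?mulr1 ?mul1r ?mulr0 ?mul0r //.
Qed.


Lemma adjmx_tens m n p q (A : 'M[C]_(m, n)) (B : 'M[C]_(p, q)) :
  adjmx (tensmx A B) = tensmx (adjmx A) (adjmx B).
Proof. by rewrite /adjmx trmx_tens map_mxT. Qed.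

Definition Qm m a : 'M[C]_((m + m) * 2 ^ a) :=
  tensmx (proj1_first R m) (1%:M : 'M[C]_(2 ^ a)).

Lemma Qm_herm m a : adjmx (Qm m a) = Qm m a.
Proof.
rewrite /Qm adjmx_tens adjmx1 /proj1_first /adjmx tr_block_mx map_block_mx.
rewrite !trmx0 !map_mx0 trmx1 map_mx1. by congr (tensmx (block_mx _ _ _ _) _).
Qed.

Lemma Qm_idem m a : Qm m a *m Qm m a = Qm m a.
Proof.
rewrite /Qm tensmx_mul mulmx1 /proj1_first mulmx_block.
by rewrite !mulmx0 !mul0mx !addr0 add0r mulmx1.
Qed.


Lemma sign_conj_mul (n : nat) : ((-1) ^+ n : C)^* * (-1) ^+ n = 1.
Proof.
by rewrite rmorphXn rmorphN1 -exprD addnn -mul2n exprM sqrrN expr1n expr1n.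
Qed.

Lemma pauli_iso d (k : 'I_d -> bool * bool) :
  adjmx (pauliU R k) *m pauliU R k = 1%:M.
Proof.
have condE (z iz : 'I_(2 ^ d)) (hz : forall j, qbit iz j = qbit z j (+) (k j).1) (i : 'I_(2 ^ d)) :
    [forall j, qbit i j == (qbit z j (+) (k j).1)] = (i == iz).
  apply/forallP/eqP => [H|->]; last by move=> j; rewrite hz.
  by apply: qbit_inj => j; rewrite hz; apply/eqP/H.
apply/matrixP => x y; rewrite !mxE.
have [ix hix] := qbit_surj (fun j => qbit x j (+) (k j).1).
rewrite (bigD1 ix) //= big1 => [|i hi]; last first.
  by rewrite !mxE (condE x ix hix) (negbTE hi) conjC0 mul0r.
rewrite !mxE (condE x ix hix) eqxx addr0.
case: (eqVneq x y) => [<-|nxy].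
  by rewrite (condE x ix hix) eqxx sign_conj_mul.
have [iy hiy] := qbit_surj (fun j => qbit y j (+) (k j).1).
rewrite (condE y iy hiy).
have -> : (ix == iy) = false.
  apply/negbTE; apply: contra nxy => /eqP exy; apply/eqP.
  apply: qbit_inj => j; have := hix j; rewrite exy hiy.
  by move/addIb.
by rewrite mulr0.
Qed.

Lemma Vemb_iso d1 d2 : (d2 <= d1)%N ->
  adjmx (Vemb R d1 d2) *m Vemb R d1 d2 = 1%:M.
Proof.
move=> hd; apply/matrixP => j j'; rewrite !mxE.
have hlt : (j * 2 ^ (d1 - d2) < 2 ^ d1)%N.
  rewrite -{2}(subnKC hd) expnD ltn_pmul2r ?expn_gt0 //.
rewrite (bigD1 (Ordinal hlt)) //= big1 => [|i hi]; last first.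
  rewrite !mxE.
  have -> : ((i : nat) == j * 2 ^ (d1 - d2))%N = false.
    by apply/negbTE; apply: contra hi => /eqP e; apply/eqP/val_inj.
  by rewrite conjC0 mul0r.
rewrite !mxE /= eqxx conjC1 mul1r addr0 eqn_pmul2r ?expn_gt0 //.
Qed.


Lemma adjmxZ m n (c : C) (A : 'M[C]_(m, n)) : adjmx (c *: A) = c^* *: adjmx A.
Proof. by apply/matrixP => i j; rewrite !mxE rmorphM. Qed.

Definition Lp n : 'M[C]_(n + n, n) := col_mx 1%:M 1%:M.
Definition Lm n : 'M[C]_(n + n, n) := col_mx 1%:M (- 1%:M).

Lemma half_add (x : C) : 2^-1 * x + 2^-1 * x = x.
Proof.
by rewrite -mulrDr -mulr2n -[x *+ 2]mulr_natl mulrA mulVf ?mul1r // pnatr_eq0.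
Qed.

Lemma block_split n (Y X : 'M[C]_n) :
  block_mx Y 0 0 Y - block_mx Y X X Y =
  Lm n *m (2^-1 *: X) *m adjmx (Lm n) - Lp n *m (2^-1 *: X) *m adjmx (Lp n).
Proof.
rewrite /Lm /Lp /adjmx !tr_col_mx !map_row_mx !linearN /= !map_mxN trmx1 map_mx1.
rewrite !mul_col_mx !mul1mx !mulNmx !mul1mx !mul_mx_row !mulmx1 !mulmxN !mulmx1 opp_row_mx opprK -!block_mxEv.
rewrite !opp_block_mx !add_block_mx !subrr.
congr block_mx; apply/matrixP => i j; by rewrite !mxE add0r -opprD half_add.
Qed.


Lemma accE m a (U : 'M[C]_((m + m) * 2 ^ a)) (rho : 'M[C]_(m + m)) :
  accept_prob U rho =
  \tr (Qm m a *m ((U *m Wm (m + m) a) *m rho *m adjmx (U *m Wm (m + m) a))).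
Proof. by rewrite /accept_prob tens_anc /Qm adjmx_mul !mulmxA. Qed.

Lemma accB m a (U : 'M[C]_((m + m) * 2 ^ a)) (x y : 'M[C]_(m + m)) :
  accept_prob U (x - y) = accept_prob U x - accept_prob U y.
Proof. by rewrite !accE mulmxBr mulmxBl mulmxBr (raddfB (@mxtrace _ _)). Qed.

Lemma acc_bnd m a (U : 'M[C]_((m + m) * 2 ^ a)) (rho : 'M[C]_(m + m)) :
  U \is unitarymx -> psdq rho -> 0 <= accept_prob U rho <= \tr rho.
Proof.
move=> /unitarymxP hU hr; rewrite accE; apply: acc_bound => //.
- exact: Qm_herm.
- exact: Qm_idem.
- rewrite adjmx_mul -mulmxA [adjmx U *m _]mulmxA.
  have -> : adjmx U *m U = 1%:M by apply: mulmx1C.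
  by rewrite mul1mx Wm_iso.
Qed.

Lemma perm_iso n (s : 'S_n) : adjmx (perm_mx s : 'M[C]_n) *m perm_mx s = 1%:M.
Proof.
rewrite /adjmx -map_trmx map_perm_mx tr_perm_mx -perm_mxM mulVg.
exact: perm_mx1.
Qed.


Lemma trZ n (c : C) (A : 'M[C]_n) : \tr (c *: A) = c * \tr A.
Proof. by rewrite /mxtrace mulr_sumr; apply: eq_bigr => i _; rewrite mxE. Qed.

End Gen.

Theorem theorem14 (R : realType) (d1 d2 : nat) :
  (1 <= d2)%N -> (d2 <= d1)%N ->
  forall (Mo : 'M[R[i]]_(2 ^ d1)) (Mc : 'M[R[i]]_(2 ^ d2)),
  density Mo -> pdmx Mo -> density Mc ->
  forall (k : 'I_d1 -> bool * bool) (k' : 'I_d2 -> bool * bool)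
         (s : 'S_(2 ^ d1 + 2 ^ d1)) (eta : nat) (eps : R),
  (0 < eta)%N -> 0 < eps ->
  (eta%:R)^-1 < eps ->
  (exists nrm lmin : R[i],
     is_opnorm (Mc'' d1 k' Mc *m invmx (Mo' k Mo) *m Mc'' d1 k' Mc) nrm /\
     is_lambda_min (Mo' k Mo) lmin /\
     ((eta%:R) ^+ 2)^-1 * nrm <= (4%:R)^-1 * lmin) ->
  forall (a : nat) (U : 'M[R[i]]_((2 ^ d1 + 2 ^ d1) * 2 ^ a)),
  U \is unitarymx ->
  `| accept_prob U (Mf false s eta (Mo' k Mo) (Mc'' d1 k' Mc))
     - accept_prob U (Mf true s eta (Mo' k Mo) (Mc'' d1 k' Mc)) |
  < real_complex R eps.
Proof.
move=> hd21 hd12 Mo Mc dMo pMo dMc k k' s eta eps heta heps hlt _ a U hU.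
set Mop := Mo' k Mo; set N := Mc'' d1 k' Mc.
have [[hMch hMcq] trMc] := dMc.
have hNq : psdq N by apply/psdq_conj/psdq_conj.
have hNh : adjmx N = N.
  by rewrite /N /Mc'' !adjmx_mul !adjmxK hMch !mulmxA.
have trN : \tr N = 1.
  rewrite /N /Mc'' mxtrace_mulC (mulmxA (adjmx _)) Vemb_iso // mul1mx.
  by rewrite mxtrace_mulC (mulmxA (adjmx _)) pauli_iso mul1mx.
set X := (eta%:R)^-1 *: N.
have hXh : (eta%:R)^-1 *: adjmx N = X by rewrite hNh.
set S := (perm_mx s : 'M[R[i]]_(2 ^ d1 + 2 ^ d1)).
set Xh := 2^-1 *: X.
have diff : Mf false s eta Mop N - Mf true s eta Mop N =
   (S *m Lm R (2 ^ d1)) *m Xh *m adjmx (S *m Lm R (2 ^ d1)) -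
   (S *m Lp R (2 ^ d1)) *m Xh *m adjmx (S *m Lp R (2 ^ d1)).
  rewrite /Mf /Ma /= hXh -/X -/S -mulmxBl -mulmxBr block_split.
  by rewrite mulmxBr mulmxBl !adjmx_mul !mulmxA.
rewrite -accB diff accB.
have hXhq : psdq Xh.
  apply: psdq_scale; first by rewrite invr_ge0 ler0n.
  apply: psdq_scale => //; by rewrite invr_ge0 ler0n.
have bnd (L : 'M[R[i]]_(2 ^ d1 + 2 ^ d1, 2 ^ d1)) :
    adjmx L *m L = 1%:M + 1%:M ->
    0 <= accept_prob U ((S *m L) *m Xh *m adjmx (S *m L)) <= (eta%:R)^-1.
  move=> hL.
  have trE : \tr ((S *m L) *m Xh *m adjmx (S *m L)) = (eta%:R)^-1.
    rewrite mxtrace_mulC mulmxA [adjmx (S *m L)]adjmx_mul.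
    rewrite -[adjmx L *m adjmx S *m (S *m L)]mulmxA (mulmxA (adjmx S)) perm_iso mul1mx hL.
    rewrite mulmxDl mul1mx mxtraceD /Xh (trZ (2^-1) X) (half_add (\tr X)).
    by rewrite /X (trZ _ N) trN mulr1.
  rewrite -trE; exact: acc_bnd hU (psdq_conj (S *m L) hXhq).
have hLm : adjmx (Lm R (2 ^ d1)) *m Lm R (2 ^ d1) = 1%:M + 1%:M.
  rewrite /Lm /adjmx !tr_col_mx !map_row_mx !linearN /= !map_mxN trmx1 map_mx1.
  by rewrite mul_row_col !mulmx1 mulNmx mulmxN mulmx1 opprK.
have hLp : adjmx (Lp R (2 ^ d1)) *m Lp R (2 ^ d1) = 1%:M + 1%:M.
  by rewrite /Lp /adjmx tr_col_mx map_row_mx mul_row_col trmx1 map_mx1 !mulmx1.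
have /andP [x0 xt] := bnd _ hLm.
have /andP [y0 yt] := bnd _ hLp.
set x := accept_prob U _ in x0 xt *.
set y := accept_prob U _ in y0 yt *.
set t := (eta%:R)^-1 : R[i] in xt yt.
have ht : t < real_complex R eps.
  by rewrite /t -(rmorph_nat (real_complex R)) -fmorphV ltcR.
apply: le_lt_trans ht.
have xr : x \is Num.real := ger0_real x0.
have yr : y \is Num.real := ger0_real y0.
rewrite (real_ler_norml t (rpredB xr yr)).
apply/andP; split.
  by apply: ler_wpDl x0 _; rewrite lerN2.
by apply: le_trans _ xt; rewrite gerBl.
Qed.
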